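(* Let $0<q<1$ and let $X\geq 0$ be a random variable whose distribution $P_X$ has a $q$-density $f$ such that the $q$-moments $m_q(n;f)$ are finite for all $n\in\mathbb{N}$. If $$\limsup_{n\to\infty}\frac{\ln m_q(n;f)}{n^2}=A<\frac{\ln(1/q)}{2},$$ then $P_X$ is $q$-moment determinate.
   Context: Fix $0<q<1$. All random variables are non-negative. The Jackson $q$-integral is $\int_0^a g(t)\,d_qt=a(1-q)\sum_{j=0}^\infty g(aq^j)q^j$ for $a>0$, and the improper $q$-integral is $\int_0^\infty g(t)\,d_qt=(1-q)\sum_{j=-\infty}^{\infty}g(q^j)q^j$. A function $f$ on $(0,\infty)$ is a $q$-density of $X$ (with distribution function $F_X$) if $F_X(x)=\int_0^x f(t)\,d_qt$ for all $x>0$. The $n$-th $q$-moment is $m_q(n;f)=m_q(n;X)=\int_0^\infty t^nf(t)\,d_qt=(1-q)\sum_{j\in\mathbb{Z}}q^{j(n+1)}f(q^j)$, $n\in\mathbb{N}_0$. For functions $f,g$ on $(0,\infty)$ write $f\sim g$ iff $f(q^j)=g(q^j)$ for all $j\in\mathbb{Z}$. A distribution $P_X$ with $q$-density $f$ and finite $q$-moments of all orders is $q$-moment determinate if, whenever $Y$ is a random variable with $q$-density $g$ and $m_q(k;Y)=m_q(k;X)$ for all $k\in\mathbb{N}_0$, one has $f\sim g$; otherwise it is $q$-moment indeterminate. *)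

(* Defs.v *)
From Stdlib Require Import Reals Lra ZArith.
Open Scope R_scope.

Definition qpow (q : R) (j : Z) : R := powerRZ q j.

(* Jackson q-integral: int_0^a g(t) d_q t = a(1-q) sum_{j>=0} g(a q^j) q^j ;
   [qint_is q g a v] means the series converges and its value is v. *)
Definition qint_is (q : R) (g : R -> R) (a v : R) : Prop :=
  infinite_sum (fun j : nat => a * (1 - q) * g (a * q ^ j) * q ^ j) v.

Definition is_cdf_nonneg (F : R -> R) : Prop :=
  (forall x y, x <= y -> F x <= F y) /\
  (forall x eps, 0 < eps -> exists delta, 0 < delta /\
       forall y, x <= y < x + delta -> Rabs (F y - F x) < eps) /\
  (forall x, x < 0 -> F x = 0) /\
  (forall eps, 0 < eps -> exists M, forall x, M <= x -> Rabs (F x - 1) < eps).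

Definition is_qdensity (q : R) (f : R -> R) : Prop :=
  exists F : R -> R, is_cdf_nonneg F /\
    forall x, 0 < x -> qint_is q f x (F x).

(* The bilateral series converges: both the part j >= 0 and the part j < 0
   (indexed by j = -(k+1), k : nat) converge. *)
Definition qmoment_is (q : R) (f : R -> R) (n : nat) (m : R) : Prop :=
  exists a b : R,
    infinite_sum (fun k : nat => qpow q (Z.of_nat k * Z.of_nat (S n))
                                 * f (qpow q (Z.of_nat k))) a /\
    infinite_sum (fun k : nat => qpow q (- Z.of_nat (S k) * Z.of_nat (S n))
                                 * f (qpow q (- Z.of_nat (S k)))) b /\
    m = (1 - q) * (a + b).

Definition qequiv (q : R) (f g : R -> R) : Prop :=
  forall j : Z, f (qpow q j) = g (qpow q j).

Definition qmoment_determinate (q : R) (f : R -> R) (m : nat -> R) : Prop :=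
  forall g : R -> R, is_qdensity q g ->
    (forall k : nat, qmoment_is q g k (m k)) -> qequiv q f g.

Definition is_limsup (u : nat -> R) (A : R) : Prop :=
  (forall eps, 0 < eps -> exists N : nat, forall n, (N <= n)%nat -> u n < A + eps) /\
  (forall eps, 0 < eps -> forall N : nat, exists n, (N <= n)%nat /\ A - eps < u n).

(* Main.v *)
Require Import Defs.
From Stdlib Require Import Reals ZArith Lra Lia.
From Coquelicot Require Import Coquelicot.
Open Scope R_scope.
Lemma ser_lim (a : nat -> R) (l : R) : is_series a l -> is_lim_seq (sum_n a) l.
Proof. intro H; exact H. Qed.

Lemma ser_le (a b : nat -> R) la lb :
  (forall k, a k <= b k) -> is_series a la -> is_series b lb -> la <= lb.
Proof.
  intros Hab Ha Hb.
  assert (H := is_lim_seq_le (sum_n a) (sum_n b) la lb).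
  simpl in H. apply H; [| exact Ha | exact Hb].
  intro n. rewrite !sum_n_Reals. apply sum_Rle. intros; auto.
Qed.

Lemma lim_ser (a : nat -> R) (l : R) : is_lim_seq (sum_n a) l -> is_series a l.
Proof. intro H; exact H. Qed.

Lemma ser_zero : is_series (fun _ : nat => 0) 0.
Proof.
  apply lim_ser.
  apply (is_lim_seq_ext (fun _ => 0)); [|apply is_lim_seq_const].
  intro n. rewrite sum_n_Reals. induction n; simpl; [lra| rewrite <- IHn; lra].
Qed.

Lemma ser_eq (a : nat -> R) (l l' : R) : is_series a l -> l = l' -> is_series a l'.
Proof. intros H <-; exact H. Qed.

Lemma ser_delta (k0 : nat) (x : R) :
  is_series (fun k => if Nat.eq_dec k k0 then x else 0) x.
Proof.
  revert x; induction k0; intro x.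
  - apply is_series_decr_1. simpl.
    apply (is_series_ext (fun _ => 0)).
    + intro n. destruct (Nat.eq_dec (S n) 0); [lia|reflexivity].
    + eapply ser_eq; [apply ser_zero|]. change (0 = x + - x); lra.
  - apply is_series_decr_1. simpl.
    apply (is_series_ext (fun k => if Nat.eq_dec k k0 then x else 0)).
    + intro n. destruct (Nat.eq_dec n k0); destruct (Nat.eq_dec (S n) (S k0)); try lia; auto.
    + eapply ser_eq; [apply IHk0|]. change (x = x + - 0); lra.
Qed.

Definition bsum (u : Z -> R) (s : R) : Prop :=
  exists a b, is_series (fun k : nat => u (Z.of_nat k)) a /\
              is_series (fun k : nat => u (- Z.of_nat (S k))%Z) b /\ s = a + b.

Lemma bsum_ext u v s : (forall j, u j = v j) -> bsum u s -> bsum v s.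
Proof.
  intros E (a & b & Ha & Hb & ->). exists a, b; repeat split; auto;
  eapply is_series_ext; try eassumption; intro; apply E.
Qed.

Lemma bsum_plus u v s t : bsum u s -> bsum v t -> bsum (fun j => u j + v j) (s + t).
Proof.
  intros (a & b & Ha & Hb & ->) (c & d & Hc & Hd & ->).
  exists (a + c), (b + d); repeat split.
  - exact (is_series_plus _ _ _ _ Ha Hc).
  - exact (is_series_plus _ _ _ _ Hb Hd).
  - lra.
Qed.

Lemma bsum_scal u s c : bsum u s -> bsum (fun j => c * u j) (c * s).
Proof.
  intros (a & b & Ha & Hb & ->).
  exists (c * a), (c * b); repeat split.
  - exact (is_series_scal _ _ _ Ha).
  - exact (is_series_scal _ _ _ Hb).
  - ring.
Qed.

Lemma bsum_le u v s t : (forall j, u j <= v j) -> bsum u s -> bsum v t -> s <= t.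
Proof.
  intros H (a & b & Ha & Hb & ->) (c & d & Hc & Hd & ->).
  assert (a <= c) by (eapply ser_le; [|exact Ha|exact Hc]; intro; apply H).
  assert (b <= d) by (eapply ser_le; [|exact Hb|exact Hd]; intro; apply H).
  lra.
Qed.

Lemma bsum_delta j0 x : bsum (fun j => if Z.eq_dec j j0 then x else 0) x.
Proof.
  destruct (Z_le_gt_dec 0 j0) as [Hj|Hj].
  - exists x, 0; repeat split; [| |lra].
    + apply (is_series_ext (fun k => if Nat.eq_dec k (Z.to_nat j0) then x else 0)).
      * intro n. destruct (Nat.eq_dec n (Z.to_nat j0)); destruct (Z.eq_dec (Z.of_nat n) j0); auto; lia.
      * apply ser_delta.
    + apply (is_series_ext (fun _ => 0)); [|apply ser_zero].
      intro n. destruct (Z.eq_dec _ j0); auto; lia.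
  - exists 0, x; repeat split; [| |lra].
    + apply (is_series_ext (fun _ => 0)); [|apply ser_zero].
      intro n. destruct (Z.eq_dec _ j0); auto; lia.
    + apply (is_series_ext (fun k => if Nat.eq_dec k (Z.to_nat (- j0 - 1)) then x else 0)).
      * intro n. destruct (Nat.eq_dec n (Z.to_nat (- j0 - 1))); destruct (Z.eq_dec (- Z.of_nat (S n)) j0); auto; lia.
      * apply ser_delta.
Qed.

Lemma nat_above (x : R) : exists n : nat, x <= INR n.
Proof.
  destruct (archimed x) as [H1 _].
  destruct (Z_le_gt_dec 0 (up x)) as [Hz|Hz].
  - exists (Z.to_nat (up x)). rewrite INR_IZR_INZ, Z2Nat.id by lia. lra.
  - exists 0%nat. assert (Hz2 : (up x < 0)%Z) by lia. apply IZR_lt in Hz2. simpl. lra.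
Qed.

Definition E (q x : R) := exp (x * ln q).

Lemma E_plus q x y : E q (x + y) = E q x * E q y.
Proof. unfold E. rewrite <- exp_plus. f_equal. ring. Qed.
Lemma E_pos q x : 0 < E q x.
Proof. apply exp_pos. Qed.
Lemma E_0 q : E q 0 = 1.
Proof. unfold E. rewrite Rmult_0_l. apply exp_0. Qed.
Lemma lnq_neg q : 0 < q < 1 -> ln q < 0.
Proof. intros [H1 H2]. rewrite <- ln_1. apply ln_increasing; lra. Qed.
Lemma E_le q x y : 0 < q < 1 -> x <= y -> E q y <= E q x.
Proof.
  intros Hq Hxy. unfold E. assert (H := lnq_neg q Hq).
  destruct (Req_dec x y) as [->|Hne]; [lra|].
  left. apply exp_increasing. nra.
Qed.
Lemma E_lt1 q x : 0 < q < 1 -> 0 < x -> E q x < 1.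
Proof.
  intros Hq Hx. unfold E. rewrite <- exp_0. apply exp_increasing.
  assert (H := lnq_neg q Hq). nra.
Qed.
Lemma E_ge1 q x : 0 < q < 1 -> x <= 0 -> 1 <= E q x.
Proof. intros Hq Hx. rewrite <- (E_0 q). apply E_le; auto. Qed.
Lemma qpow_E q j : 0 < q -> qpow q j = E q (IZR j).
Proof. intro H. unfold qpow. rewrite powerRZ_Rpower by auto. reflexivity. Qed.
Lemma E_nat q n : 0 < q -> E q (INR n) = q ^ n.
Proof. intro H. unfold E. rewrite <- Rpower_pow by auto. reflexivity. Qed.

Lemma qdens_nonneg q h : 0 < q < 1 -> is_qdensity q h -> forall x, 0 < x -> 0 <= h x.
Proof.
  intros Hq [F [[Hmon _] Hint]] x Hx.
  assert (Hqx : 0 < q * x) by nra.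
  pose proof (proj2 (is_series_Reals _ _) (Hint x Hx)) as H1.
  pose proof (proj2 (is_series_Reals _ _) (Hint (q * x) Hqx)) as H2.
  set (u := fun j : nat => x * (1 - q) * h (x * q ^ j) * q ^ j) in *.
  assert (H3 : is_series (fun k => u (S k)) (F x - u 0%nat)).
  { apply is_series_incr_1. eapply ser_eq; [exact H1|]. change (F x = F x - u 0%nat + u 0%nat)%R. lra. }
  assert (H4 : is_series (fun k => u (S k)) (F (q * x))).
  { eapply is_series_ext; [|exact H2]. intro k. unfold u. simpl.
    replace (x * (q * q ^ k)) with (q * x * q ^ k) by ring. ring. }
  apply is_series_unique in H3. apply is_series_unique in H4.
  assert (HF : F (q * x) <= F x) by (apply Hmon; nra).
  assert (Hu : u 0%nat = x * (1 - q) * h x) by (unfold u; simpl; rewrite !Rmult_1_r; reflexivity).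
  assert (0 <= x * (1 - q) * h x) by lra.
  assert (0 < x * (1 - q)) by nra.
  destruct (Rle_or_lt 0 (h x)); auto. nra.
Qed.

Definition W q (h : R -> R) (j : Z) := E q (IZR j) * h (E q (IZR j)).

Lemma term_eq q h j n : 0 < q ->
  qpow q (j * Z.of_nat (S n)) * h (qpow q j) = W q h j * E q (IZR j * INR n).
Proof.
  intro H. rewrite !qpow_E by auto. unfold W.
  rewrite mult_IZR, <- INR_IZR_INZ, S_INR.
  replace (IZR j * (INR n + 1)) with (IZR j + IZR j * INR n) by ring.
  rewrite E_plus. ring.
Qed.

Lemma bsum_eqv u s t : bsum u s -> s = t -> bsum u t.
Proof. intros H <-; exact H. Qed.

Lemma mom_bsum q h n mn : 0 < q < 1 -> qmoment_is q h n mn ->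
  bsum (fun j => W q h j * E q (IZR j * INR n)) (mn / (1 - q)).
Proof.
  intros Hq (a & b & Ha & Hb & Hm).
  exists a, b; repeat split.
  - apply is_series_Reals in Ha. eapply is_series_ext; [|exact Ha].
    intro k. apply term_eq; lra.
  - apply is_series_Reals in Hb. eapply is_series_ext; [|exact Hb].
    intro k. apply term_eq; lra.
  - rewrite Hm. field. lra.
Qed.

Fixpoint Pn (q : R) (j0 : Z) (N : nat) (x : R) : R :=
  match N with
  | O => 1
  | S N' => Pn q j0 N' x * (1 - x * E q (INR (S N') - IZR j0))
  end.

Lemma Pn_S q j0 N x : Pn q j0 (S N) x = Pn q j0 N x * (1 - x * E q (INR (S N) - IZR j0)).
Proof. reflexivity. Qed.

Lemma good_P q j0 (c : Z -> R) :
  (forall n, bsum (fun j => c j * E q (IZR j * INR n)) 0) ->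
  forall N n, bsum (fun j => c j * E q (IZR j * INR n) * Pn q j0 N (E q (IZR j))) 0.
Proof.
  intros H0 N. induction N as [|N IH]; intro n.
  - eapply bsum_ext; [|apply (H0 n)]. intro j. simpl. ring.
  - set (al := E q (INR (S N) - IZR j0)).
    eapply bsum_eqv; [eapply bsum_ext; [| apply (bsum_plus _ _ _ _ (IH n) (bsum_scal _ _ (- al) (IH (S n))))]|ring].
    intro j. rewrite Pn_S. fold al. rewrite (S_INR n).
    replace (IZR j * (INR n + 1)) with (IZR j * INR n + IZR j) by ring.
    rewrite E_plus. ring.
Qed.

Lemma exp_mono x y : x <= y -> exp x <= exp y.
Proof. intro H. destruct (Req_dec x y) as [->|]; [lra|]. left; apply exp_increasing; lra. Qed.

Lemma Pn_01 q j0 : 0 < q < 1 -> forall N y, IZR j0 <= y ->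
  0 <= Pn q j0 N (E q y) <= 1.
Proof.
  intros Hq N y Hy. induction N as [|N IH]; [simpl; lra|].
  rewrite Pn_S. rewrite <- E_plus.
  assert (H1 : E q (y + (INR (S N) - IZR j0)) < 1).
  { apply E_lt1; auto. rewrite S_INR. pose proof (pos_INR N). lra. }
  pose proof (E_pos q (y + (INR (S N) - IZR j0))). nra.
Qed.

Lemma Pn_zero q j0 : forall N i, (i < N)%nat -> Pn q j0 N (E q (IZR j0 - INR (S i))) = 0.
Proof.
  induction N as [|N IH]; intros i Hi; [lia|].
  rewrite Pn_S. destruct (Nat.eq_dec i N) as [->|Hne].
  - rewrite <- E_plus. replace (IZR j0 - INR (S N) + (INR (S N) - IZR j0)) with 0 by ring.
    rewrite E_0. ring.
  - rewrite IH by lia. ring.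
Qed.

Lemma Pn_big q j0 : 0 < q < 1 -> forall N y, y + INR N - IZR j0 <= 0 ->
  Rabs (Pn q j0 N (E q y)) <= E q (INR N * y - INR N * IZR j0 + INR N * (INR N + 1) / 2).
Proof.
  intros Hq N. induction N as [|N IH]; intros y Hy.
  - simpl. rewrite Rabs_R1. replace (0 * y - 0 * IZR j0 + 0 * (0 + 1) / 2) with 0 by field.
    rewrite E_0; lra.
  - rewrite Pn_S, <- E_plus, Rabs_mult.
    rewrite S_INR in *.
    assert (Hy' : y + INR N - IZR j0 <= 0) by lra.
    specialize (IH y Hy').
    assert (He : 1 <= E q (y + (INR N + 1 - IZR j0))) by (apply E_ge1; auto; lra).
    assert (Hf : Rabs (1 - E q (y + (INR N + 1 - IZR j0))) <= E q (y + (INR N + 1 - IZR j0))).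
    { rewrite Rabs_left1 by lra. lra. }
    replace ((INR N + 1) * y - (INR N + 1) * IZR j0 + (INR N + 1) * (INR N + 1 + 1) / 2)
      with ((INR N * y - INR N * IZR j0 + INR N * (INR N + 1) / 2) + (y + (INR N + 1 - IZR j0))) by field.
    rewrite (E_plus q (INR N * y - INR N * IZR j0 + INR N * (INR N + 1) / 2)). apply Rmult_le_compat; auto using Rabs_pos.
Qed.

Lemma factor_low q x : 0 < q < 1 -> 0 <= x <= q -> exp (- (x / (1 - q))) <= 1 - x.
Proof.
  intros Hq Hx.
  assert (H1 := exp_ineq1_le (x / (1 - x))).
  assert (H2 : 1 / (1 - x) <= exp (x / (1 - x))).
  { replace (1 / (1 - x)) with (1 + x / (1 - x)) by (field; lra). exact H1. }
  assert (H3 : exp (- (x / (1 - x))) <= 1 - x).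
  { rewrite exp_Ropp. pose proof (exp_pos (x / (1 - x))).
    apply (Rmult_le_reg_l (exp (x / (1 - x)))); auto.
    rewrite Rinv_r by lra.
    apply (Rmult_le_reg_l (/ (1 - x))). apply Rinv_0_lt_compat; lra.
    replace (/ (1 - x) * (exp (x / (1 - x)) * (1 - x))) with (exp (x / (1 - x))) by (field; lra).
    unfold Rdiv in H2. lra. }
  eapply Rle_trans; [|exact H3]. apply exp_mono.
  apply Ropp_le_contravar. unfold Rdiv. apply Rmult_le_compat_l; [lra|].
  apply Rinv_le_contravar; lra.
Qed.

Lemma Pn_low q j0 : 0 < q < 1 -> forall N,
  exp (- ((1 - q ^ N) / (1 - q) ^ 2)) <= Pn q j0 N (E q (IZR j0)).
Proof.
  intros Hq N. induction N as [|N IH].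
  - simpl. replace (- ((1 - 1) / ((1 - q) * ((1 - q) * 1)))) with 0 by (field; lra).
    rewrite exp_0; lra.
  - rewrite Pn_S, <- E_plus.
    replace (IZR j0 + (INR (S N) - IZR j0)) with (INR (S N)) by ring.
    rewrite E_nat by lra.
    assert (Ht : 0 <= q ^ N) by (apply pow_le; lra).
    assert (Ht1 : q ^ N <= 1) by (clear IH; induction N as [|N IHN]; simpl; nra).
    assert (Hf := factor_low q (q ^ S N) Hq).
    assert (Hf' : exp (- (q ^ S N / (1 - q))) <= 1 - q ^ S N).
    { apply Hf. simpl. split; nra. }
    assert (Hsum : - ((1 - q ^ S N) / (1 - q) ^ 2) + q ^ N =
                   - ((1 - q ^ N) / (1 - q) ^ 2) + - (q ^ S N / (1 - q))).
    { simpl. field. lra. }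
    apply Rle_trans with (exp (- ((1 - q ^ N) / (1 - q) ^ 2) + - (q ^ S N / (1 - q)))).
    + apply exp_mono. lra.
    + rewrite exp_plus. apply Rmult_le_compat; auto; left; apply exp_pos.
Qed.

Lemma Z_IZR_le (a b : Z) : (a <= b)%Z -> IZR a <= IZR b.
Proof. apply IZR_le. Qed.

Lemma key q (c V : Z -> R) (Sm : nat -> R) j0 n N :
  0 < q < 1 -> (forall j, Rabs (c j) <= V j) ->
  (forall M, bsum (fun j => V j * E q (IZR j * INR M)) (Sm M)) ->
  (forall n, bsum (fun j => c j * E q (IZR j * INR n)) 0) ->
  Rabs (c j0 * E q (IZR j0 * INR n) * Pn q j0 N (E q (IZR j0))) <=
  E q ((IZR j0 + 1) * INR n) * Sm 0%nat +
  E q (INR N * (INR N + 1) / 2 - INR N * IZR j0) * Sm (n + N)%nat.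
Proof.
  intros Hq HcV HV Hc.
  set (D := INR N * (INR N + 1) / 2 - INR N * IZR j0).
  set (t := fun j => c j * E q (IZR j * INR n) * Pn q j0 N (E q (IZR j))).
  assert (Ht : bsum t 0) by (apply good_P; auto).
  set (b := fun j => E q ((IZR j0 + 1) * INR n) * (V j * E q (IZR j * INR 0))
                    + E q D * (V j * E q (IZR j * INR (n + N)))).
  set (B := E q ((IZR j0 + 1) * INR n) * Sm 0%nat + E q D * Sm (n + N)%nat).
  assert (Hb : bsum b B) by (apply bsum_plus; apply bsum_scal; apply HV).
  set (t' := fun j => t j + (if Z.eq_dec j j0 then - t j0 else 0)).
  assert (Ht' : bsum t' (0 + - t j0)) by (apply bsum_plus; [exact Ht| apply bsum_delta]).
  assert (HVp : forall j, 0 <= V j) by (intro j; eapply Rle_trans; [apply Rabs_pos|apply HcV]).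
  assert (Hb0 : forall j, 0 <= E q ((IZR j0 + 1) * INR n) * (V j * E q (IZR j * INR 0))).
  { intro j. pose proof (E_pos q ((IZR j0 + 1) * INR n)). pose proof (E_pos q (IZR j * INR 0)).
    pose proof (HVp j). apply Rmult_le_pos; [lra|]. apply Rmult_le_pos; lra. }
  assert (Hb1 : forall j, 0 <= E q D * (V j * E q (IZR j * INR (n + N)))).
  { intro j. pose proof (E_pos q D). pose proof (E_pos q (IZR j * INR (n + N))).
    pose proof (HVp j). apply Rmult_le_pos; [lra|]. apply Rmult_le_pos; lra. }
  assert (Htabs : forall j, Rabs (t j) = Rabs (c j) * E q (IZR j * INR n) * Rabs (Pn q j0 N (E q (IZR j)))).
  { intro j. unfold t. rewrite !Rabs_mult. rewrite (Rabs_pos_eq (E q _)) by (left; apply E_pos). ring. }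
  assert (Hcl : forall j, Rabs (t' j) <= b j).
  { intro j. unfold t', b. destruct (Z.eq_dec j j0) as [->|Hne].
    - replace (t j0 + - t j0) with 0 by ring. rewrite Rabs_R0. pose proof (Hb0 j0); pose proof (Hb1 j0); lra.
    - rewrite Rplus_0_r, Htabs.
      destruct (Z_lt_le_dec j0 j) as [Hgt|Hle].
      +
        assert (Hj : IZR j0 + 1 <= IZR j).
        { replace (IZR j0 + 1) with (IZR (j0 + 1)) by (rewrite plus_IZR; reflexivity). apply IZR_le; lia. }
        assert (HP := Pn_01 q j0 Hq N (IZR j) ltac:(lra)).
        rewrite (Rabs_pos_eq (Pn _ _ _ _)) by lra.
        assert (HE : E q (IZR j * INR n) <= E q ((IZR j0 + 1) * INR n)).
        { apply E_le; auto. apply Rmult_le_compat_r; [apply pos_INR|lra]. }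
        simpl INR at 3. rewrite Rmult_0_r, E_0, Rmult_1_r.
        pose proof (Hb1 j). pose proof (HcV j). pose proof (Rabs_pos (c j)). pose proof (E_pos q (IZR j * INR n)).
        apply Rle_trans with (V j * E q ((IZR j0 + 1) * INR n)); [|rewrite (Rmult_comm (E q _) (V j)); lra].
        apply Rle_trans with (Rabs (c j) * E q (IZR j * INR n)); [apply Rle_trans with (Rabs (c j) * E q (IZR j * INR n) * 1); [apply Rmult_le_compat_l; [apply Rmult_le_pos; lra|lra] | lra]|].
        apply Rmult_le_compat; lra.
      + destruct (Z_le_gt_dec (j0 - Z.of_nat N) j) as [Hmid|Hlow].
        *
          assert (Hi : (Z.to_nat (j0 - j - 1) < N)%nat) by lia.
          assert (Hj : IZR j = IZR j0 - INR (S (Z.to_nat (j0 - j - 1)%Z))).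
          { rewrite INR_IZR_INZ, Nat2Z.inj_succ, Z2Nat.id by lia.
            rewrite <- minus_IZR. f_equal. lia. }
          assert (HP0 : Pn q j0 N (E q (IZR j)) = 0) by (rewrite Hj; apply Pn_zero; exact Hi).
          rewrite HP0, Rabs_R0, Rmult_0_r.
          pose proof (Hb0 j); pose proof (Hb1 j). lra.
        *
          assert (Hj : IZR j + INR N - IZR j0 <= 0).
          { rewrite INR_IZR_INZ, <- plus_IZR, <- minus_IZR. apply IZR_le. lia. }
          assert (HP := Pn_big q j0 Hq N (IZR j) Hj).
          assert (Heq : E q (INR N * IZR j - INR N * IZR j0 + INR N * (INR N + 1) / 2)
                        * E q (IZR j * INR n) = E q D * E q (IZR j * INR (n + N))).
          { rewrite <- !E_plus. f_equal. unfold D. rewrite plus_INR. field. }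
          pose proof (Hb0 j). pose proof (HcV j). pose proof (Rabs_pos (c j)).
          pose proof (E_pos q (IZR j * INR n)). pose proof (Rabs_pos (Pn q j0 N (E q (IZR j)))).
          apply Rle_trans with (E q D * (V j * E q (IZR j * INR (n + N)))); [|lra].
          replace (E q D * (V j * E q (IZR j * INR (n + N)))) with
            (V j * (E q (INR N * IZR j - INR N * IZR j0 + INR N * (INR N + 1) / 2) * E q (IZR j * INR n)))
            by (rewrite Heq; ring).
          replace (Rabs (c j) * E q (IZR j * INR n) * Rabs (Pn q j0 N (E q (IZR j)))) with
            (Rabs (c j) * (Rabs (Pn q j0 N (E q (IZR j))) * E q (IZR j * INR n))) by ring.
          apply Rmult_le_compat; [lra | apply Rmult_le_pos; lra | lra | apply Rmult_le_compat_r; [left; apply E_pos | exact HP]]. }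
  assert (H1 : 0 + - t j0 <= B).
  { eapply bsum_le; [|exact Ht'|exact Hb]. intro j. pose proof (Hcl j) as Hj. apply Rabs_le_between in Hj; lra. }
  assert (H2 : -1 * B <= 0 + - t j0).
  { eapply bsum_le; [|apply (bsum_scal _ _ (-1) Hb)|exact Ht']. intro j. pose proof (Hcl j) as Hj.
    apply Rabs_le_between in Hj; lra. }
  change (Rabs (t j0) <= B). apply Rabs_le. lra.
Qed.

Lemma exp_bound (L a K n j0 : R) :
  0 < L -> 0 <= K -> 0 <= n ->
  0 < L / 2 * K ^ 2 - a * (K + 1) ^ 2 ->
  L * (K + 1) * Rabs j0 + L <= (L / 2 * K ^ 2 - a * (K + 1) ^ 2) * n ->
  (K * n * (K * n + 1) / 2 - K * n * j0 - j0 * n) * (- L) + a * (n + K * n) ^ 2 <= - L * n.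
Proof.
  intros HL HK Hn Hc Hn2.
  set (cc := L / 2 * K ^ 2 - a * (K + 1) ^ 2) in *.
  assert (E1 : (K * n * (K * n + 1) / 2 - K * n * j0 - j0 * n) * (- L) + a * (n + K * n) ^ 2
               = - cc * n ^ 2 - L * K * n / 2 + L * (K + 1) * n * j0) by (unfold cc; field).
  rewrite E1.
  assert (E2 : L * (K + 1) * n * j0 <= L * (K + 1) * n * Rabs j0).
  { apply Rmult_le_compat_l; [apply Rmult_le_pos; [apply Rmult_le_pos|]; lra|apply Rle_abs]. }
  assert (E3 : 0 <= L * K * n / 2) by (apply Rmult_le_pos; [apply Rmult_le_pos; [apply Rmult_le_pos|]|]; lra).
  assert (E4 : n * (L * (K + 1) * Rabs j0 + L) <= n * (cc * n)) by (apply Rmult_le_compat_l; lra).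
  nra.
Qed.

Lemma W_nonneg q h : 0 < q < 1 -> is_qdensity q h -> forall j, 0 <= W q h j.
Proof.
  intros Hq Hh j. unfold W. apply Rmult_le_pos; [left; apply E_pos|].
  apply (qdens_nonneg q h Hq Hh). apply E_pos.
Qed.

Theorem proposition1 (q : R) (f : R -> R) (m : nat -> R) (A : R) :
  0 < q < 1 ->
  is_qdensity q f ->
  (forall n : nat, qmoment_is q f n (m n)) ->
  is_limsup (fun n : nat => ln (m n) / (INR n) ^ 2) A ->
  A < ln (1 / q) / 2 ->
  qmoment_determinate q f m.
Proof.
  intros Hq Hf Hmf [Hlim _] HA g Hg Hmg j0.
  set (c := fun j => W q f j - W q g j).
  set (V := fun j => W q f j + W q g j).
  set (Sm := fun M => m M / (1 - q) + m M / (1 - q)).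
  assert (HcV : forall j, Rabs (c j) <= V j).
  { intro j. unfold c, V. pose proof (W_nonneg q f Hq Hf j). pose proof (W_nonneg q g Hq Hg j).
    apply Rabs_le. lra. }
  assert (HV : forall M, bsum (fun j => V j * E q (IZR j * INR M)) (Sm M)).
  { intro M. eapply bsum_ext; [|apply (bsum_plus _ _ _ _ (mom_bsum q f M _ Hq (Hmf M)) (mom_bsum q g M _ Hq (Hmg M)))].
    intro j. unfold V. ring. }
  assert (Hc : forall n, bsum (fun j => c j * E q (IZR j * INR n)) 0).
  { intro n. eapply bsum_eqv.
    - eapply bsum_ext; [|apply (bsum_plus _ _ _ _ (mom_bsum q f n _ Hq (Hmf n)) (bsum_scal _ _ (-1) (mom_bsum q g n _ Hq (Hmg n))))].
      intro j. unfold c. ring.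
    - ring. }
  assert (Hlq := lnq_neg q Hq).
  set (L := - ln q).
  assert (HL : 0 < L) by (unfold L; lra).
  assert (HA' : A < L / 2).
  { unfold L. replace (1 / q) with (/ q) in HA by (field; lra). rewrite ln_Rinv in HA by lra. exact HA. }
  set (eps := (L / 2 - A) / 2).
  assert (Heps : 0 < eps) by (unfold eps; lra).
  set (a := A + eps).
  set (d := L / 2 - a).
  assert (Hd : 0 < d) by (unfold d, a, eps; lra).
  destruct (Hlim eps Heps) as [N0 HN0].
  destruct (nat_above ((3 * Rabs a + d) / d + 1)) as [K HK].
  assert (HK1 : 1 <= INR K).
  { assert (0 <= (3 * Rabs a + d) / d). { apply Rmult_le_pos; [pose proof (Rabs_pos a); lra| left; apply Rinv_0_lt_compat; lra]. } lra. }
  assert (HKd : 3 * Rabs a + d <= d * INR K).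
  { assert (Hx : (3 * Rabs a + d) / d <= INR K) by lra.
    apply (Rmult_le_compat_l d) in Hx; [|lra].
    replace (d * ((3 * Rabs a + d) / d)) with (3 * Rabs a + d) in Hx by (field; lra). exact Hx. }
  set (cc := L / 2 * INR K ^ 2 - a * (INR K + 1) ^ 2).
  assert (Hcc : 0 < cc).
  { unfold cc. replace (L / 2) with (d + a) by (unfold d; ring).
    pose proof (Rle_abs a). pose proof (Rabs_pos a).
    assert (d * INR K * INR K >= (3 * Rabs a + d) * INR K) by nra.
    nra. }
  set (bb := L * (INR K + 1) * Rabs (IZR j0) + L).
  destruct (nat_above (bb / cc)) as [n2 Hn2].
  set (delta := exp (- (1 / (1 - q) ^ 2))).
  assert (Hdelta : 0 < delta) by apply exp_pos.
  set (Cst := Sm 0%nat + 2 / (1 - q)).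
  assert (Hev : forall n, (1 <= n)%nat -> (N0 <= n)%nat -> (n2 <= n)%nat ->
                Rabs (c j0) * delta <= q ^ n * Cst).
  { intros n Hn1 HnN0 Hnn2.
    set (N := (K * n)%nat).
    assert (Hkey := key q c V Sm j0 n N Hq HcV HV Hc).
    set (D := INR N * (INR N + 1) / 2 - INR N * IZR j0) in Hkey.
    set (M := (n + N)%nat) in Hkey.
    assert (HP := Pn_low q j0 Hq N).
    assert (HPd : delta <= Pn q j0 N (E q (IZR j0))).
    { eapply Rle_trans; [|exact HP]. apply exp_mono. apply Ropp_le_contravar.
      unfold Rdiv. apply Rmult_le_compat_r.
      - left. apply Rinv_0_lt_compat. apply pow_lt. lra.
      - assert (0 <= q ^ N) by (apply pow_le; lra). lra. }
    assert (HL1 : Rabs (c j0) * E q (IZR j0 * INR n) * delta <=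
                  Rabs (c j0 * E q (IZR j0 * INR n) * Pn q j0 N (E q (IZR j0)))).
    { rewrite !Rabs_mult, (Rabs_pos_eq (E q _)) by (left; apply E_pos).
      rewrite (Rabs_pos_eq (Pn _ _ _ _)) by lra.
      apply Rmult_le_compat_l; [|exact HPd]. apply Rmult_le_pos; [apply Rabs_pos|left; apply E_pos]. }
    assert (HmM : m M <= exp (a * INR M ^ 2)).
    { assert (HM1 : 0 < INR M).
      { unfold M. rewrite plus_INR. pose proof (pos_INR N). assert (1 <= INR n) by (apply (le_INR 1); lia). lra. }
      assert (HMN0 : (N0 <= M)%nat) by (unfold M; lia).
      specialize (HN0 M HMN0). simpl in HN0. fold a in HN0.
      assert (HM2 : 0 < INR M ^ 2) by (apply pow_lt; lra).
      destruct (Rle_or_lt (m M) 0) as [Hle|Hgt]; [pose proof (exp_pos (a * INR M ^ 2)); lra|].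
      rewrite <- (exp_ln (m M)) by lra. left. apply exp_increasing.
      apply (Rmult_lt_compat_r (INR M ^ 2)) in HN0; [|lra].
      unfold Rdiv in HN0. rewrite Rmult_assoc, Rinv_l, Rmult_1_r in HN0 by lra. lra. }
    assert (Hexp : (D - IZR j0 * INR n) * ln q + a * INR M ^ 2 <= INR n * ln q).
    { unfold D, M, N. rewrite plus_INR, mult_INR.
      replace (ln q) with (- L) by (unfold L; ring).
      replace ((INR K * INR n * (INR K * INR n + 1) / 2 - INR K * INR n * IZR j0 - IZR j0 * INR n) * - L
               + a * (INR n + INR K * INR n) ^ 2) with
        ((INR K * INR n * (INR K * INR n + 1) / 2 - INR K * INR n * IZR j0 - IZR j0 * INR n) * - L
               + a * (INR n + INR K * INR n) ^ 2) by reflexivity.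
      replace (INR n * - L) with (- L * INR n) by ring.
      apply exp_bound; auto.
      - lra.
      - apply pos_INR.
      - fold cc. assert (bb / cc <= INR n) by (eapply Rle_trans; [exact Hn2| apply le_INR; exact Hnn2]).
        apply (Rmult_le_compat_l cc) in H; [|lra].
        replace (cc * (bb / cc)) with bb in H by (field; lra). unfold bb in H. lra. }
    assert (HT2 : E q D * Sm M <= E q (IZR j0 * INR n) * (E q (INR n) * (2 / (1 - q)))).
    { replace (E q D) with (E q (IZR j0 * INR n) * E q (D - IZR j0 * INR n))
        by (rewrite <- E_plus; f_equal; ring).
      rewrite Rmult_assoc. apply Rmult_le_compat_l; [left; apply E_pos|].
      unfold Sm.
      apply Rle_trans with (E q (D - IZR j0 * INR n) * (2 / (1 - q)) * exp (a * INR M ^ 2)).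
      - replace (m M / (1 - q) + m M / (1 - q)) with (2 / (1 - q) * m M) by (field; lra).
        pose proof (E_pos q (D - IZR j0 * INR n)).
        assert (0 < 2 / (1 - q)) by (apply Rdiv_lt_0_compat; lra).
        rewrite <- Rmult_assoc. apply Rmult_le_compat_l; [nra|exact HmM].
      - replace (E q (D - IZR j0 * INR n) * (2 / (1 - q)) * exp (a * INR M ^ 2)) with
          (exp ((D - IZR j0 * INR n) * ln q + a * INR M ^ 2) * (2 / (1 - q)))
          by (unfold E; rewrite exp_plus; ring).
        apply Rmult_le_compat_r; [left; apply Rdiv_lt_0_compat; lra|].
        unfold E. apply exp_mono. exact Hexp. }
    assert (HT1 : E q ((IZR j0 + 1) * INR n) = E q (IZR j0 * INR n) * E q (INR n)).
    { rewrite <- E_plus. f_equal. ring. }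
    rewrite HT1 in Hkey.
    assert (Hfin : E q (IZR j0 * INR n) * (Rabs (c j0) * delta) <=
                   E q (IZR j0 * INR n) * (E q (INR n) * Cst)).
    { unfold Cst. lra. }
    apply Rmult_le_reg_l in Hfin; [|apply E_pos].
    rewrite E_nat in Hfin by lra. exact Hfin. }
  assert (Hz : Rabs (c j0) * delta <= 0).
  { assert (Hle := is_lim_seq_le_loc (fun _ => Rabs (c j0) * delta) (fun n => q ^ n * Cst)
                    (Rabs (c j0) * delta) (0 * Cst)).
    simpl in Hle. replace 0 with (0 * Cst) by ring. apply Hle.
    - exists (S (N0 + n2)). intros n Hn. apply Hev; lia.
    - apply is_lim_seq_const.
    - apply (is_lim_seq_mult' (fun n => q ^ n) (fun _ => Cst) 0 Cst); [|apply is_lim_seq_const].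
      apply is_lim_seq_geom. rewrite Rabs_pos_eq; lra. }
  assert (Hc0 : c j0 = 0).
  { pose proof (Rabs_pos (c j0)). assert (Rabs (c j0) = 0) by nra. now apply Rabs_eq_0. }
  unfold c, W in Hc0. rewrite !qpow_E by lra.
  pose proof (E_pos q (IZR j0)).
  apply (Rmult_eq_reg_l (E q (IZR j0))); lra.
Qed.
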